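(* The ind-scheme $\mathcal M^\infty=\bigcup_N\mathcal M^N$ is Zariski-dense in $L^-\mathrm{GL}_K$; i.e., a function in $\mathbb C[L^-\mathrm{GL}_K]$ vanishing on $\mathcal M^N$ for every $N$ is zero.
   Context: $\mathcal M(N,K)=\mathrm{Rep}(N,K)/\!/\mathrm{GL}_N$, $\mathrm{Rep}(N,K)$ being triples $(B,\psi,\overline\psi)$ with $B\in\mathrm{Mat}_{N\times N}(\mathbb C)$, $\psi\in\mathrm{Mat}_{N\times K}$, $\overline\psi\in\mathrm{Mat}_{K\times N}$, and $g\cdot(B,\psi,\overline\psi)=(gBg^{-1},g\psi,\overline\psi g^{-1})$. $L^-\mathrm{GL}_K$ is the group scheme of power series $1+\sum_{i\ge1}g_iz^{-i}$, $g_i\in\mathfrak{gl}_K$, with coordinate ring $\mathbb C[T^{(n)}_{ab}:n\ge0,1\le a,b\le K]$, $T^{(n)}_{ab}$ being the $(a,b)$ entry of $g_{n+1}$. Let $\pi_N:\mathcal M(N,K)\to L^-\mathrm{GL}_K$, $(B,\psi,\overline\psi)\mapsto1+\overline\psi(z-\widetilde B/2)^{-1}\psi=1+\sum_{i\ge1}2^{1-i}\overline\psi\widetilde B^{i-1}\psi z^{-i}$, where $\widetilde B=B+\psi\overline\psi$. $\mathcal M^N\subset L^-\mathrm{GL}_K$ is the scheme-theoretic image of $\pi_N$; $\mathcal M^N\subset\mathcal M^{N'}$ for $N<N'$. *)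

(* Defs.v *)
From HB Require Import structures.
From mathcomp Require Import all_boot all_order all_algebra.
From mathcomp Require Import Rstruct.
From mathcomp.real_closed Require Import complex.
From mathcomp Require Import mpoly.
Set Implicit Arguments. Unset Strict Implicit. Unset Printing Implicit Defensive.
Import GRing.Theory.
Local Open Scope ring_scope.

Definition CC : Type := (Rdefinitions.R)[i].
HB.instance Definition _ := GRing.Field.on CC.

(* The coordinates T^{(n)}_{ab} (n >= 0, a b : 'I_K) of the point
   pi_N(B, psi, psibar) of L^-GL_K, i.e. the (a,b) entry of the coefficient
   g_{n+1} = 2^{-n} psibar Btilde^n psi of z^{-(n+1)} in
   1 + psibar (z - Btilde/2)^{-1} psi, with Btilde = B + psi psibar. *)
Definition Btilde (N K : nat) (B : 'M[CC]_N) (psi : 'M[CC]_(N, K))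
  (psib : 'M[CC]_(K, N)) : 'M[CC]_N := B + psi *m psib.

Definition piN_coord (N K : nat) (B : 'M[CC]_N) (psi : 'M[CC]_(N, K))
  (psib : 'M[CC]_(K, N)) (n : nat) (a b : 'I_K) : CC :=
  ((2%:R)^-1 ^+ n *: (psib *m (Btilde B psi psib ^+ n) *m psi)) a b.

(* Main.v *)
Require Import Defs.
From HB Require Import structures.
From mathcomp Require Import all_boot all_order all_algebra.
From mathcomp Require Import mpoly.
From mathcomp Require Import zify.
Set Implicit Arguments. Unset Strict Implicit. Unset Printing Implicit Defensive.
Import GRing.Theory Num.Theory.
Local Open Scope ring_scope.

Section Vanish.
Variable R : idomainType.
Hypothesis natrI : injective (fun k : nat => k%:R : R).

Lemma poly_vanish (q : {poly R}) : (forall t, q.[t] = 0) -> q = 0.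
Proof.
move=> H; apply: (@roots_geq_poly_eq0 _ q [seq k%:R | k <- iota 0 (size q)]).
- by apply/allP => x /mapP [k _ ->]; rewrite /root H.
- by rewrite (map_inj_uniq natrI) iota_uniq.
- by rewrite size_map size_iota.
Qed.

Definition wd n (i : 'I_n) : 'I_n.+1 := widen_ord (leqnSn n) i.

Definition mres n (m : 'X_{1..n.+1}) : 'X_{1..n} := [multinom m (wd i) | i < n].

Definition pslice n (p : {mpoly R[n.+1]}) (j : nat) : {mpoly R[n]} :=
  \sum_(m <- msupp p | m ord_max == j) p@_m *: 'X_[mres m].

Definition qpoly n (p : {mpoly R[n.+1]}) (w : 'I_n -> R) : {poly R} :=
  \sum_(m <- msupp p) (p@_m * \prod_(i < n) w i ^+ m (wd i)) *: 'X^(m ord_max).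

Lemma qpoly_horner n (v : 'I_n.+1 -> R) p :
  meval v p = (qpoly p (fun i => v (wd i))).[v ord_max].
Proof.
rewrite mevalE /qpoly horner_sum; apply: eq_bigr => m _.
by rewrite hornerZ hornerXn big_ord_recr /= mulrA.
Qed.

Lemma coef_qpoly n (p : {mpoly R[n.+1]}) w j :
  (qpoly p w)`_j = meval w (pslice p j).
Proof.
rewrite coef_sum /pslice raddf_sum /= [RHS]big_mkcond /=; apply: eq_bigr => m _.
rewrite coefZ coefXn eq_sym; case: eqP => _; last by rewrite mulr0.
rewrite mulr1 mevalZ mevalX; congr (_ * _); apply: eq_bigr => i _.
by rewrite mnmE.
Qed.

Lemma wd_lift n (i : 'I_n) : wd i = lift ord_max i.
Proof. by apply: val_inj; rewrite /= /bump leqNgt ltn_ord. Qed.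

Lemma mres_eq n (m m' : 'X_{1..n.+1}) :
  m' ord_max = m ord_max -> (mres m' == mres m) = (m' == m).
Proof.
move=> e; apply/eqP/eqP => [h|->//]; apply/mnmP => i.
case: (unliftP ord_max i) => [j ->|->//].
have := congr1 (fun mm : 'X_{1..n} => mm j) h.
by rewrite /mres !mnmE !wd_lift.
Qed.

Lemma mcoeff_pslice n (p : {mpoly R[n.+1]}) m :
  (pslice p (m ord_max))@_(mres m) = p@_m.
Proof.
have -> : p@_m = \sum_(m' <- msupp p) p@_m' * (m' == m)%:R.
  rewrite {1}(mpolyE p) raddf_sum /=; apply: eq_bigr => m' _.
  by rewrite mcoeffZ mcoeffX.
rewrite /pslice raddf_sum /= [LHS]big_mkcond /=; apply: eq_bigr => m' _.
case: eqP => [e|ne].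
  by rewrite mcoeffZ mcoeffX mres_eq.
case: eqP => [e|_]; last by rewrite mulr0.
by rewrite e in ne.
Qed.

Lemma mpoly_vanish_coef n (p : {mpoly R[n]}) :
  (forall v, meval v p = 0) -> forall m, p@_m = 0.
Proof.
elim: n p => [|n IH] p H m.
  have := H (fun _ => 0); rewrite mevalE => <-.
  rewrite {1}(mpolyE p) raddf_sum /=; apply: eq_bigr => m' _.
  rewrite mcoeffZ mcoeffX big_ord0 (_ : m' == m) //.
  by apply/eqP/mnmP => -[].
rewrite -(mcoeff_pslice p m); apply: IH => w.
have Hq : qpoly p w = 0.
  apply: poly_vanish => t.
  pose v : 'I_n.+1 -> R := fun i => if unlift ord_max i is Some j then w j else t.
  have -> : qpoly p w = qpoly p (fun i => v (wd i)).
    rewrite /qpoly; apply: eq_bigr => m' _; congr (_ *: _); congr (_ * _).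
    by apply: eq_bigr => i _; rewrite /v wd_lift liftK.
  have -> : t = v ord_max by rewrite /v unlift_none.
  by rewrite -qpoly_horner H.
by rewrite -coef_qpoly Hq coef0.
Qed.

Lemma mpoly_vanish n (p : {mpoly R[n]}) : (forall v, meval v p = 0) -> p = 0.
Proof.
move=> H; apply/mpolyP => m; rewrite mcoeff0; exact: mpoly_vanish_coef.
Qed.
End Vanish.

From mathcomp Require Import Rstruct.
From mathcomp.real_closed Require Import complex.

Definition CCn : numClosedFieldType := (Rdefinitions.R)[i].

Lemma CC_natrI : injective (fun k : nat => k%:R : CC).
Proof.
move=> a b /= h; have : (a%:R : CCn) = b%:R by exact: h.
by move/eqP; rewrite eqr_nat => /eqP.
Qed.

Lemma CC_two_neq0 : (2%:R : CC) != 0.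
Proof. by apply/eqP => h; have := @CC_natrI 2 0 h. Qed.

Lemma sum_delta (S : pzRingType) N (F : 'I_N -> S) t (ht : (t < N)%N) :
  \sum_(k < N) F k * (k == t :> nat)%:R = F (Ordinal ht).
Proof.
rewrite (bigD1 (Ordinal ht)) //= eqxx mulr1 big1 ?addr0 // => k nk.
rewrite (_ : (k == t :> nat) = false) ?mulr0 //.
apply: contraNF nk => /eqP e; apply/eqP/val_inj; exact: e.
Qed.

Lemma sum_delta0 (S : pzRingType) N (F : 'I_N -> S) t (ht : (N <= t)%N) :
  \sum_(k < N) F k * (k == t :> nat)%:R = 0.
Proof.
apply: big1 => k _; rewrite (_ : (k == t :> nat) = false) ?mulr0 //.
by apply/negbTE; rewrite neq_ltn (leq_trans (ltn_ord k) ht).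
Qed.

Definition shiftM N K : 'M[CC]_N := \matrix_(j, k) (j == (k + K)%N :> nat)%:R.
Definition psiM N K : 'M[CC]_(N, K) := \matrix_(j, b) (j == b :> nat)%:R.

Lemma shift_pow N K n j b :
  (shiftM N K ^+ n *m psiM N K) j b = (j == (b + n * K)%N :> nat)%:R.
Proof.
elim: n j => [|n IH] j.
  by rewrite expr0 mul1mx mxE mul0n addn0.
rewrite exprS -mulmxE -mulmxA mxE.
under eq_bigr => k _ do rewrite IH mxE.
case: (ltnP (b + n * K) N) => h.
  rewrite (sum_delta _ h) /=.
  have -> : (b + n.+1 * K = b + n * K + K)%N by rewrite mulSn; lia.
  by [].
rewrite (sum_delta0 _ h).
rewrite (_ : (j == (b + n.+1 * K)%N :> nat) = false) //.
apply/negbTE; rewrite neq_ltn (leq_trans (ltn_ord j)) //.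
by rewrite mulSn; lia.
Qed.

Lemma realize K m (lab : 'I_m -> nat * 'I_K * 'I_K) (lab_inj : injective lab)
  (x : 'I_m -> CC) :
  exists N (B : 'M[CC]_N) psi psib, forall i,
    piN_coord B psi psib (lab i).1.1 (lab i).1.2 (lab i).2 = x i.
Proof.
pose c (n : nat) (a : 'I_K) (b : nat) : CC :=
  if [pick i | ((lab i).1 == (n, a)) && ((lab i).2 == b :> nat)] is Some i
  then x i else 0.
have cE i : c (lab i).1.1 (lab i).1.2 (lab i).2 = x i.
  rewrite /c; case: pickP => [i' /andP [/eqP e1 /eqP e2]|/(_ i)].
    congr x; apply: lab_inj.
    move: e1 e2; case: (lab i') => [[n1 a1] b1]; case: (lab i) => [[n2 a2] b2].
    by move=> /= -> e2; congr pair; apply: val_inj.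
  by rewrite -surjective_pairing !eqxx.
pose D := (\max_(i < m) (lab i).1.1).+1.
pose N := (D * K)%N.
pose M := shiftM N K.
pose psi := psiM N K.
pose psib : 'M[CC]_(K, N) :=
  \matrix_(a, j) (2%:R ^+ (j %/ K) * c (j %/ K)%N a (j %% K)%N).
exists N, (M - psi *m psib), psi, psib => i.
rewrite /piN_coord /Btilde subrK mxE -mulmxA mxE.
under eq_bigr => k _ do rewrite shift_pow mxE.
set n := (lab i).1.1; set a := (lab i).1.2; set b := (lab i).2.
have hnD : (n < D)%N by rewrite ltnS; exact: (leq_bigmax_cond (F := fun i => (lab i).1.1)).
have ht : (b + n * K < N)%N.
  have hb := ltn_ord b.
  have : (n.+1 * K <= D * K)%N by rewrite leq_mul2r hnD orbT.
  by rewrite mulSn; lia.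
rewrite (sum_delta (fun k : 'I_N => 2%:R ^+ (k %/ K) * c (k %/ K)%N a (k %% K)%N) ht) /=.
have hK : (0 < K)%N by exact: leq_ltn_trans (leq0n _) (ltn_ord b).
have -> : ((b + n * K) %/ K = n)%N.
  by rewrite divnDr ?dvdn_mull // divn_small // mulnK // add0n.
have -> : ((b + n * K) %% K = b)%N.
  by rewrite -modnDm modnMl addn0 modn_mod modn_small.
rewrite mulrA -exprMn mulVf ?CC_two_neq0 // expr1n mul1r.
exact: cE.
Qed.

Theorem mainTheorem4 (K m : nat) (lab : 'I_m -> nat * 'I_K * 'I_K)
  (lab_inj : injective lab) (f : {mpoly CC[m]}) :
  (forall (N : nat) (B : 'M[CC]_N) (psi : 'M[CC]_(N, K)) (psib : 'M[CC]_(K, N)),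
     meval (fun i => piN_coord B psi psib (lab i).1.1 (lab i).1.2 (lab i).2) f
     = 0) ->
  f = 0.
Proof.
move=> H; apply: (mpoly_vanish CC_natrI) => x.
have [N [B [psi [psib E]]]] := realize lab_inj x.
rewrite -(H N B psi psib); apply: meval_eq => i; by rewrite E.
Qed.
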